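(* Let $k$ be an algebraically closed field of characteristic zero, $f\in k[[\mathbf x]][z]$, $\mathbf x=(x_1,\dots,x_d)$, and let $\Gamma$ be a compact $1$-dimensional face of the Newton diagram of $f$ which does not meet the hyperplane $\{z=0\}$, with face polynomial $$f_\Gamma=a_\Gamma\,\mathbf x^{\mathbf n}z^{e}\prod_{j=1}^{r}(z^{p}-\mu_j\mathbf x^{\mathbf q})^{m_j},$$ where $e\ge1$, $\gcd(\mathbf q,p)=1$, $\mu_j\in k^*$ pairwise distinct, $a_\Gamma\in k^*$. Then the Newton diagram of $f_z=\partial f/\partial z$ has a face $\Gamma'$ parallel to $\Gamma$ with $$(f_z)_{\Gamma'}=a_\Gamma\mathbf x^{\mathbf n}z^{e-1}\Big(\prod_{j=1}^r(z^p-\mu_j\mathbf x^{\mathbf q})^{m_j-1}\Big)\Big(e\prod_{j=1}^r(z^p-\mu_j\mathbf x^{\mathbf q})+p\,z^{p}\sum_{i=1}^r m_i\prod_{j\neq i}(z^p-\mu_j\mathbf x^{\mathbf q})\Big).$$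
   Context: The Newton diagram of $h=\sum c_{\alpha,\beta}\mathbf x^\alpha z^\beta$ is the convex hull of $\operatorname{supp}(h)+\mathbb R^{d+1}_{\ge0}$; for a compact face $\gamma$, $h_\gamma$ is the sum of the terms of $h$ whose exponents lie on $\gamma$. *)

(* Defs.v *)
From HB Require Import structures.
From mathcomp Require Import all_boot all_order all_algebra all_field.
From mathcomp Require Import mpoly.
Set Implicit Arguments. Unset Strict Implicit. Unset Printing Implicit Defensive.
Import Order.TTheory GRing.Theory Num.Theory.
Local Open Scope ring_scope.

(* Variables x_1..x_d are indices widen_ord i (i : 'I_d) of 'I_d.+1;
   the variable z is the index ord_max. *)

(* An element of k[[x]] [[z]] given by its coefficient function on
   exponents (alpha, beta) in N^d x N, encoded as multinomials of 'X_{1..d.+1}. *)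
Definition xzseries (k : nzRingType) (d : nat) := 'X_{1..d.+1} -> k.

(* f lies in k[[x]][z]: bounded degree in z. *)
Definition poly_in_z (k : nzRingType) d (f : xzseries k d) : Prop :=
  exists N : nat, forall m : 'X_{1..d.+1}, (N < m ord_max)%N -> f m = 0.

Definition dz (k : nzRingType) d (f : xzseries k d) : xzseries k d :=
  fun m => (m ord_max).+1%:R * f (m + U_(ord_max))%MM.

Definition wt d (w : 'I_d.+1 -> rat) (m : 'X_{1..d.+1}) : rat :=
  \sum_(i < d.+1) w i * (m i)%:R.

(* m is an exponent of f lying on the face of the Newton diagram of f
   cut out by the supporting functional w (i.e. minimizing <w,.>). *)
Definition on_face (k : nzRingType) d (f : xzseries k d) (w : 'I_d.+1 -> rat)
  (m : 'X_{1..d.+1}) : Prop :=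
  f m != 0 /\ forall m', f m' != 0 -> wt w m <= wt w m'.

(* w strictly positive: the face it exposes is compact *)
Definition pos_weight d (w : 'I_d.+1 -> rat) : Prop := forall i, 0 < w i.

Definition face_poly (k : nzRingType) d (f : xzseries k d) (w : 'I_d.+1 -> rat)
  (P : {mpoly k[d.+1]}) : Prop :=
  forall m, (on_face f w m -> P@_m = f m) /\ (~ on_face f w m -> P@_m = 0).

Definition xvar (k : nzRingType) d (i : 'I_d) : {mpoly k[d.+1]} :=
  'X_(widen_ord (leqnSn d) i).
Definition zvar (k : nzRingType) d : {mpoly k[d.+1]} := 'X_(ord_max).
Definition xmon (k : nzRingType) d (n : 'I_d -> nat) : {mpoly k[d.+1]} :=
  \prod_(i < d) xvar k i ^+ n i.

Definition gcd_vec d (q : 'I_d -> nat) (p : nat) : nat :=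
  gcdn (\big[gcdn/0%N]_(i < d) q i) p.

(* Main.v *)
Require Import Defs.
From HB Require Import structures.
From mathcomp Require Import all_boot all_order all_algebra all_field.
From mathcomp Require Import mpoly.
From Stdlib Require Import Classical.
From mathcomp Require Import ring.
Import Order.TTheory GRing.Theory Num.Theory.
Local Open Scope ring_scope.
Set Implicit Arguments. Unset Strict Implicit.

Section D.
Variable (k : comNzRingType) (n : nat) (i : 'I_n).
Local Notation D := (mderiv i).

Lemma mderiv1 : D 1 = 0 :> {mpoly k[n]}.
Proof. by rewrite -mpolyC1 mderivC. Qed.

Lemma mderiv_exp (x : {mpoly k[n]}) m : D (x ^+ m) = x ^+ m.-1 * D x *+ m.
Proof.
elim: m => [|m IH]; first by rewrite expr0 mderiv1 mulr0n.
rewrite exprS mderivM IH; case: m IH => [|m] IH /=.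
  by rewrite mulr0n mulr0 addr0 !expr0 mulr1 mul1r mulr1n.
rewrite mulrnAr mulrA -exprS mulrS [D x * _]mulrC.
by rewrite [RHS]mulrS [in RHS]mulrS.

Qed.

Lemma mderiv_prod_seq (I : eqType) (s : seq I) (F : I -> {mpoly k[n]}) :
  uniq s ->
  D (\prod_(j <- s) F j) = \sum_(l <- s) D (F l) * \prod_(j <- s | j != l) F j.
Proof.
elim: s => [|a s IH] /=; first by rewrite !big_nil mderiv1.
case/andP => as_ us.
rewrite !big_cons mderivM IH // eqxx /= mulr_sumr.
congr (_ * _ + _).
  rewrite big_seq_cond [RHS]big_seq_cond; apply: eq_bigl => j.
  case: (boolP (j \in s)) => js //=.
  by have -> : j != a by apply: contraNneq as_ => <-.
rewrite !big_seq; apply: eq_bigr => l ls.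
rewrite big_cons.
have -> : (a != l) by apply: contraNneq as_ => ->.
by rewrite mulrCA.
Qed.

Lemma mderiv_prod r (F : 'I_r -> {mpoly k[n]}) :
  D (\prod_(j < r) F j) = \sum_(l < r) D (F l) * \prod_(j < r | j != l) F j.
Proof. exact: mderiv_prod_seq (index_enum_uniq _) . Qed.

Lemma mderiv_const_prod r (F : 'I_r -> {mpoly k[n]}) :
  (forall j, D (F j) = 0) -> D (\prod_(j < r) F j) = 0.
Proof.
move=> H; apply: (big_ind (fun x => D x = 0)); first exact: mderiv1.
  by move=> x y hx hy; rewrite mderivM hx hy mul0r mulr0 addr0.
by move=> j _.
Qed.
End D.

Lemma wtD d (w : 'I_d.+1 -> rat) m1 m2 : wt w (m1 + m2)%MM = wt w m1 + wt w m2.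
Proof.
rewrite /wt -big_split /=; apply: eq_bigr => i _.
by rewrite mnmDE natrD mulrDr.
Qed.

Lemma face_dz (k : fieldType) d (f : xzseries k d) w (P : {mpoly k[d.+1]}) :
  [pchar k] =i pred0 ->
  face_poly f w P -> (exists m0, P@_m0 != 0) ->
  (forall m, P@_m != 0 -> exists m', m = (m' + U_(ord_max))%MM) ->
  face_poly (dz f) w (mderiv ord_max P).
Proof.
move=> /pcharf0P ch HP [m0 Pm0] Hdiv.
set u := U_(@ord_max d)%MM.
have nz : forall j : nat, (j.+1)%:R != 0 :> k by move=> j; rewrite ch.
have dzE : forall m, dz f m != 0 <-> f (m + u)%MM != 0.
  move=> m; rewrite /dz; split => h.
    by apply: contraNneq h => ->; rewrite mulr0.
  by rewrite mulf_neq0.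
have fm0 : on_face f w m0.
  case: (classic (on_face f w m0)) => // H.
  by move: Pm0; rewrite (proj2 (HP m0) H) eqxx.
have [m1 em1] := Hdiv _ Pm0.
move=> m; split.
  move=> [Hm Hmin].
  have fu : on_face f w (m + u)%MM.
    split; first by apply/dzE.
    move=> m' fm'.
    have h1 : wt w m <= wt w m1.
      by apply: Hmin; apply/dzE; rewrite -em1; case: fm0.
    apply: le_trans (proj2 fm0 _ fm'); rewrite em1 !wtD.
    by rewrite lerD2r.
  by rewrite mcoeff_deriv (proj1 (HP _) fu) /dz mulr_natl.
move=> Hn; rewrite mcoeff_deriv.
case: (classic (on_face f w (m + u)%MM)) => H; last first.
  by rewrite (proj2 (HP _) H) mul0rn.
exfalso; apply: Hn; split; first by apply/dzE; case: H.
move=> m' /dzE fm'.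
by have := proj2 H _ fm'; rewrite !wtD lerD2r.
Qed.

Lemma xvar_nz (k : fieldType) d (i : 'I_d.+1) : ('X_i : {mpoly k[d.+1]}) != 0.
Proof.
apply/eqP => h; have := congr1 (mcoeff U_(i)) h.
by rewrite mcoeffXU mcoeff0 eqxx => /eqP; rewrite oner_eq0.
Qed.

Lemma xmon_nz (k : fieldType) d (n : 'I_d -> nat) : xmon k n != 0.
Proof.
rewrite /xmon; apply: (big_ind (fun x => x != 0)) => //; first exact: oner_neq0.
  by move=> x y; apply: mulf_neq0.
by move=> i _; rewrite expf_neq0 // xvar_nz.
Qed.

Lemma D_xmon (k : fieldType) d (n : 'I_d -> nat) : mderiv ord_max (xmon k n) = 0.
Proof.
apply: mderiv_const_prod => j; rewrite mderiv_exp /xvar mderivX mnm1E.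
have -> : (widen_ord (leqnSn d) j == ord_max) = false.
  by apply/negbTE; rewrite -val_eqE /= neq_ltn ltn_ord.
by rewrite scale0r mulr0 mul0rn.
Qed.

Lemma D_zvar (k : fieldType) d : mderiv ord_max (zvar k d) = 1.
Proof.
rewrite /zvar mderivX mnm1E eqxx.
have -> : (U_(@ord_max d) - U_(ord_max) = 0)%MM by apply/mnmP => j; rewrite !mnmE subnn.
by rewrite mpolyX0 scale1r.
Qed.

Lemma alg_id0 (R : comNzRingType) (X W V A B C E P Z : R) :
  X * (W * E) * (A * B) + X * (W * Z) * (V * A * C * P) =
  X * W * A * (B * E + V * Z * C * P).
Proof. ring. Qed.

Lemma alg_id1 (R : comNzRingType) (X Z A B C : R) e p :
  (0 * Z ^+ e.+1 + X * (Z ^+ e * 1 *+ e.+1)) * (A * B) +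
  X * Z ^+ e.+1 * (Z ^+ p * A * C *+ p.+1) =
  X * Z ^+ e * A * (B *+ e.+1 + Z ^+ p.+1 * C *+ p.+1).
Proof.
rewrite !exprSr; move: (Z ^+ e) (Z ^+ p) => W V.
rewrite mul0r add0r mulr1.
have h : forall (x : R) n, x *+ n = x * n%:R by move=> x n; rewrite mulr_natr.
rewrite (h W) (h B) (h (V * A * C)) (h (V * Z * C)); exact: alg_id0.
Qed.

Lemma alg_id2 (R : comNzRingType) (X Z A : R) e :
  X * (Z ^+ e * Z) * A = X * Z ^+ e * A * Z.
Proof. by rewrite mulrA mulrAC. Qed.

Theorem lemma4p10 (k : closedFieldType) (d : nat) (f : xzseries k d)
  (w : 'I_d.+1 -> rat) (a : k) (n q : 'I_d -> nat) (e p r : nat)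
  (mu : 'I_r -> k) (mult : 'I_r -> nat) :
  [pchar k] =i pred0 ->
  poly_in_z f ->
  pos_weight w ->
  (1 <= e)%N -> (0 < p)%N -> gcd_vec q p = 1%N ->
  (0 < r)%N -> (forall j, 0 < mult j)%N ->
  injective mu -> (forall j, mu j != 0) -> a != 0 ->
  face_poly f w
    (a *: (xmon k n * zvar k d ^+ e *
       \prod_(j < r) (zvar k d ^+ p - mu j *: xmon k q) ^+ mult j)) ->
  exists2 w' : 'I_d.+1 -> rat, pos_weight w' &
  face_poly (dz f) w'
    (a *: (xmon k n * zvar k d ^+ (e - 1) *
       (\prod_(j < r) (zvar k d ^+ p - mu j *: xmon k q) ^+ (mult j - 1)) *
       (e%:R *: \prod_(j < r) (zvar k d ^+ p - mu j *: xmon k q)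
        + p%:R *: (zvar k d ^+ p *
            \sum_(i < r) (mult i)%:R *:
               \prod_(j < r | j != i) (zvar k d ^+ p - mu j *: xmon k q))))).
Proof.
move=> pch _ wpos e1 p0 _ _ mpos _ _ a0 HF.
exists w => //.
case: e e1 HF => // e _ HF; case: p p0 HF => // p _ HF.
rewrite !subn1 /=.
have ch := (pcharf0P _).1 pch.
set Z := zvar k d in HF *; set X := xmon k n in HF *.
set G := fun j => Z ^+ p.+1 - mu j *: xmon k q.
have -> : \prod_(j < r) (Z ^+ p.+1 - mu j *: xmon k q) = \prod_(j < r) G j by [].
have EG : forall j, Z ^+ p.+1 - mu j *: xmon k q = G j by [].
under eq_bigr do rewrite EG.
under [in X in _ + X]eq_bigr do under eq_bigr do rewrite EG.
pose Pi := \prod_(j < r) G j ^+ mult j.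
pose Pi' := \prod_(j < r) G j ^+ (mult j - 1).
pose Pg := \prod_(j < r) G j.
have HF' : face_poly f w (a *: (X * Z ^+ e.+1 * Pi)) := HF.
have DG : forall j, mderiv ord_max (G j) = Z ^+ p *+ p.+1.
  move=> j; rewrite /G mderivB mderivZ D_xmon scaler0 subr0 mderiv_exp D_zvar.
  by rewrite mulr1.
have Gnz : forall j, G j != 0.
  move=> j; apply/eqP => h; have := DG j; rewrite h mderiv0 => /eqP.
  rewrite eq_sym -scaler_nat scaler_eq0 ch /= expf_eq0 /Z /zvar (negbTE (xvar_nz _ _)).
  by rewrite andbF.
have PiE : Pi = Pi' * Pg.
  rewrite /Pi /Pi' /Pg -big_split /=; apply: eq_bigr => j _.
  by rewrite -exprSr subn1 prednK.
have DPi : mderiv ord_max Pi = (Z ^+ p * Pi' * \sum_(i < r) (mult i)%:R *: \prod_(j < r | j != i) G j) *+ p.+1.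
  rewrite /Pi mderiv_prod mulr_sumr -sumrMnl; apply: eq_bigr => l _.
  have -> : Pi' = G l ^+ (mult l - 1) * \prod_(j < r | j != l) G j ^+ (mult j - 1).
    by rewrite /Pi' (bigD1 l).
  rewrite mderiv_exp DG.
  have -> : \prod_(j < r | j != l) G j ^+ mult j =
            \prod_(j < r | j != l) G j ^+ (mult j - 1) * \prod_(j < r | j != l) G j.
    rewrite -big_split /=; apply: eq_bigr => j _.
    by rewrite -exprSr subn1 prednK.
  rewrite scaler_nat !subn1; ring.
set S := \sum_(i < r) (mult i)%:R *: \prod_(j < r | j != i) G j.
have key : mderiv ord_max (a *: (X * Z ^+ e.+1 * Pi)) =
    a *: (X * Z ^+ e * Pi' * (e.+1%:R *: Pg + p.+1%:R *: (Z ^+ p.+1 * S))).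
  rewrite mderivZ !mderivM D_xmon mderiv_exp D_zvar DPi PiE; congr (_ *: _).
  rewrite !scaler_nat /=.
  rewrite -/S.
  exact: alg_id1.
rewrite -key.
have Pinz : Pi != 0.
  rewrite /Pi; apply: (big_ind (fun x => x != 0)) => //; first exact: oner_neq0.
    by move=> x y; apply: mulf_neq0.
  by move=> j _; apply: expf_neq0.
have Pnz : a *: (X * Z ^+ e.+1 * Pi) != 0.
  rewrite scaler_eq0 negb_or a0 /= !mulf_neq0 // ?xmon_nz //.
  by rewrite expf_neq0 // /Z /zvar xvar_nz.
apply: face_dz pch HF' _ _.
  case: (classic (exists m0, (a *: (X * Z ^+ e.+1 * Pi))@_m0 != 0)) => // H.
  exfalso; apply: (negP Pnz); apply/eqP/mpolyP => m; rewrite mcoeff0.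
  by case: (eqVneq (a *: (X * Z ^+ e.+1 * Pi))@_m 0) => // hm; exfalso; apply: H; exists m.
move=> m hm.
have E : a *: (X * Z ^+ e.+1 * Pi) = (a *: (X * Z ^+ e * Pi)) * 'X_[U_(ord_max)].
  rewrite -scalerAl; congr (_ *: _); rewrite exprSr.
  exact: alg_id2.
move: hm; rewrite -mcoeff_msupp E (perm_mem (msuppMX _ _)).
by case/mapP => m' _ ->; exists m'; rewrite addmC.
Qed.
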